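(* Let $A\subseteq B\subseteq C$ be modules in $\mathcal G$ such that $A$ is a strict subobject of $B$ and $B$ is a strict subobject of $C$. Then $A$ is a strict subobject of $C$. Equivalently, a composition of cofibrations is a cofibration.
   Context: Let $\Lambda$ be a finite dimensional algebra over a field and $\mathrm{mod}\text-\Lambda$ the category of finitely generated right $\Lambda$-modules. Fix a torsion class $\mathcal G\subseteq\mathrm{mod}\text-\Lambda$, i.e. a class of modules closed under isomorphisms, extensions and quotients. For $B\in\mathcal G$, a subobject of $B$ is a submodule of $B$ that lies in $\mathcal G$ (including $0$ and $B$). A subobject $A\subseteq B$ is a strict subobject if $A\cap B'\in\mathcal G$ for every subobject $B'$ of $B$. A monomorphism whose image is a strict subobject is called a cofibration. *)

(* Defs.v *)
From HB Require Import structures.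
From mathcomp Require Import all_boot all_order all_algebra all_field.
Set Implicit Arguments. Unset Strict Implicit. Unset Printing Implicit Defensive.
Import GRing.Theory.
Local Open Scope ring_scope.

(* Lambda : a finite dimensional K-algebra (falgType K).
   A finitely generated right Lambda-module = finite dimensional K-vector space
   K^n (row vectors) with a right action v . x := v *m ract x. *)
Section Defs.
Variables (K : fieldType) (Lam : falgType K).

Record rmod := RMod {
  rdim : nat;
  ract : Lam -> 'M[K]_rdim;
  ract_linear : forall (a : K) (x y : Lam), ract (a *: x + y) = a *: ract x + ract y;
  ract1 : ract 1 = 1%:M;
  ractM : forall x y : Lam, ract (x * y) = ract x *m ract y }.

Definition is_hom (M N : rmod) (f : 'M[K]_(rdim M, rdim N)) : Prop :=
  forall x : Lam, ract M x *m f = f *m ract N x.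

Definition torsion_class (G : rmod -> Prop) : Prop :=
  (* closed under isomorphisms *)
  (forall (M N : rmod) (f : 'M[K]_(rdim M, rdim N)),
      is_hom f -> row_free f -> row_full f -> G M -> G N) /\
  (* closed under quotients (epimorphic images) *)
  (forall (M N : rmod) (f : 'M[K]_(rdim M, rdim N)),
      is_hom f -> row_full f -> G M -> G N) /\
  (* closed under extensions: 0 -> L0 -f-> M -g-> N -> 0 exact *)
  (forall (L0 M N : rmod) (f : 'M[K]_(rdim L0, rdim M)) (g : 'M[K]_(rdim M, rdim N)),
      is_hom f -> is_hom g -> row_free f -> row_full g ->
      (f == kermx g)%MS -> G L0 -> G N -> G M).

(* subspaces of a module M are row spaces of square matrices U *)
Definition submod (M : rmod) (U : 'M[K]_(rdim M)) : Prop :=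
  forall x : Lam, (U *m ract M x <= U)%MS.

(* the subspace U of M is (isomorphic to) a module in G *)
Definition inG (G : rmod -> Prop) (M : rmod) (U : 'M[K]_(rdim M)) : Prop :=
  exists (N : rmod) (f : 'M[K]_(rdim N, rdim M)),
    [/\ G N, is_hom f, row_free f & (f == U)%MS].

(* U is a subobject of V (both subspaces of the ambient module M) *)
Definition subobject (G : rmod -> Prop) (M : rmod) (V U : 'M[K]_(rdim M)) : Prop :=
  [/\ submod U, (U <= V)%MS & inG G U].

Definition strict_subobject (G : rmod -> Prop) (M : rmod) (V U : 'M[K]_(rdim M)) : Prop :=
  subobject G V U /\
  forall W : 'M[K]_(rdim M), subobject G V W -> inG G (U :&: W)%MS.

End Defs.

(* Main.v *)
Require Import Defs.
From HB Require Import structures.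
From mathcomp Require Import all_boot all_order all_algebra all_field.
Local Open Scope ring_scope.

Lemma inG_eq (K : fieldType) (Lam : falgType K) (G : rmod Lam -> Prop)
  (C : rmod Lam) (U V : 'M[K]_(rdim C)) :
  inG G U -> (U <= V)%MS -> (V <= U)%MS -> inG G V.
Proof.
move=> [N [f [GN hf rf /andP[fU Uf]]]] UV VU.
exists N, f; split=> //; apply/andP; split.
  exact: submx_trans fU UV.
exact: submx_trans VU Uf.
Qed.

Lemma submod_cap (K : fieldType) (Lam : falgType K) (C : rmod Lam)
  (U V : 'M[K]_(rdim C)) : submod U -> submod V -> submod (U :&: V)%MS.
Proof.
move=> hU hV x; rewrite sub_capmx; apply/andP; split.
  exact: submx_trans (submxMr _ (capmxSl U V)) (hU x).
exact: submx_trans (submxMr _ (capmxSr U V)) (hV x).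
Qed.

Theorem mainTheorem1 (K : fieldType) (Lam : falgType K) (G : rmod Lam -> Prop)
  (C : rmod Lam) (A B : 'M[K]_(rdim C)) :
  torsion_class G -> G C ->
  strict_subobject G B A ->
  strict_subobject G 1%:M B ->
  strict_subobject G 1%:M A.
Proof.
move=> _ _ [[sA AB gA] hA] [[sB _ gB] hB].
split; first by split=> //; exact: submx1.
move=> W [sW _ gW].
have gBW : inG G (B :&: W)%MS by apply: hB; split=> //; exact: submx1.
have : inG G (A :&: (B :&: W))%MS.
  apply: hA; split; first exact: submod_cap.
    exact: capmxSl.
  exact: gBW.
move=> h; apply: (inG_eq _ _ _ _ _ _ h).
  rewrite sub_capmx; apply/andP; split; first exact: capmxSl.
  exact: submx_trans (capmxSr _ _) (capmxSr _ _).
rewrite sub_capmx capmxSl /= sub_capmx capmxSr andbT.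
exact: submx_trans (capmxSl _ _) AB.
Qed.
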